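(* Let $(g_t^* )_{t\in[0,1]}$ be a family of Lebesgue probability densities $g_t^*$ on $\mathbb{R}$ such that for every $s\in\mathbb{R}$ the function $t\mapsto g_t^*(s)$ is continuous on $[0,1]$ and $\int_{\mathbb{R}} \sup_{t\in[0,1]} g_t^*(s)\,ds<\infty$. Define \[ \|f\|_{g^*} := \int_{\mathbb{R}} \sup_{t\in[0,1]}\big(|f(t)|\,g_t^*(s)\big)\,ds, \qquad f\in E[0,1]. \] Then $\|\cdot\|_{g^*}$ is a $D$-norm; more precisely, for every real-valued random variable $X$ with Lebesgue density $h>0$, the process $\mathbf{Z}=(Z_t)_{t\in[0,1]}$ with $Z_t:=g_t^*(X)/h(X)$ is a generator and $\|f\|_{g^*}=E\big(\sup_{t\in[0,1]}|f(t)Z_t|\big)$ for all $f\in E[0,1]$.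
   Context: $E[0,1]$ denotes the set of all bounded real-valued functions on $[0,1]$ that have only finitely many discontinuities. $\bar C^+[0,1]$ denotes the set of non-negative continuous functions on $[0,1]$. A generator is a stochastic process $\mathbf{Z}=(Z_t)_{t\in[0,1]}$ with sample paths in $\bar C^+[0,1]$ such that $E(Z_t)=1$ for every $t\in[0,1]$ and $E(\sup_{t\in[0,1]}Z_t)<\infty$. A $D$-norm is a function on $E[0,1]$ of the form $\|f\|_D=E\big(\sup_{t\in[0,1]}|f(t)Z_t|\big)$, $f\in E[0,1]$, for some generator $\mathbf{Z}$; $\mathbf{Z}$ is then said to generate this $D$-norm. *)

(* Defs.v *)
From HB Require Import structures.
From mathcomp Require Import all_boot all_order all_algebra.
From mathcomp Require Import all_classical all_reals all_analysis.
Set Implicit Arguments. Unset Strict Implicit. Unset Printing Implicit Defensive.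
Import Order.TTheory GRing.Theory Num.Theory.
Import numFieldNormedType.Exports.
Local Open Scope classical_set_scope.
Local Open Scope ring_scope.

Definition I01 {R : realType} : set R := `[0%R, 1%R].

(* Functions are represented as R -> R; only values on [0,1] matter. *)
Definition E01 {R : realType} (f : R -> R) : Prop :=
  (exists M : R, forall t, I01 t -> `|f t| <= M) /\
  finite_set [set t | I01 t /\ ~ (f @ within I01 (nbhs t) --> f t)].

Definition sup01 {R : realType} (F : R -> R) : \bar R :=
  ereal_sup [set (F t)%:E | t in I01].

Definition is_generator {R : realType} (d : measure_display)
  (T : measurableType d) (P : probability T R) (Z : R -> T -> R) : Prop :=
  (forall t, I01 t -> measurable_fun setT (Z t)) /\
  (forall w, {within I01, continuous (fun t => Z t w)} /\
             (forall t, I01 t -> 0 <= Z t w)) /\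
  (forall t, I01 t -> (\int[P]_w (Z t w)%:E = 1)%E) /\
  (\int[P]_w sup01 (fun t => Z t w) < +oo)%E.

Definition Dnorm {R : realType} (d : measure_display)
  (T : measurableType d) (P : probability T R) (Z : R -> T -> R)
  (f : R -> R) : \bar R :=
  (\int[P]_w sup01 (fun t => (`|f t * Z t w|)%R))%E.

Definition gstar_norm {R : realType} (g : R -> R -> R) (f : R -> R) : \bar R :=
  (\int[lebesgue_measure]_s sup01 (fun t => (`|f t| * g t s)%R))%E.

Definition is_prob_density {R : realType} (p : R -> R) : Prop :=
  measurable_fun setT p /\ (forall s, 0 <= p s) /\
  (\int[lebesgue_measure]_s (p s)%:E = 1)%E.

Definition Zproc {R : realType} (T : Type) (g : R -> R -> R) (h : R -> R)
  (X : T -> R) : R -> T -> R :=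
  fun t w => g t (X w) / h (X w).

(* Main.v *)
Require Import Defs.
From HB Require Import structures.
From mathcomp Require Import all_boot all_order all_algebra.
From mathcomp Require Import all_classical all_reals all_analysis.
From mathcomp Require Import measurable_realfun lra.
Import Order.TTheory GRing.Theory Num.Theory.
Import numFieldNormedType.Exports.
Local Open Scope classical_set_scope.
Local Open Scope ring_scope.
Section cov.
Local Open Scope ereal_scope.
Context d (T : measurableType d) (R : realType).
Variables (mu nu : {measure set T -> \bar R}) (g : T -> R).
Hypothesis g0 : forall x, (0 <= g x)%R.
Hypothesis mg : measurable_fun setT g.
Hypothesis Hnu : forall A, measurable A -> nu A = \int[mu]_(x in A) (g x)%:E.
Import HBNNSimple.

Lemma my_cov (f : T -> \bar R) (E : set T) : (forall x, 0 <= f x) ->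
    measurable E -> measurable_fun E f ->
  \int[mu]_(x in E) (f x * (g x)%:E) = \int[nu]_(x in E) f x.
Proof.
move=> f0 mE mf.
have mgE : measurable_fun E (fun x => (g x)%:E).
  by apply/measurable_EFinP; exact: measurable_funTS.
pose h := nnsfun_approx mE mf.
have -> : \int[nu]_(x in E) f x =
    lim (\int[nu]_(x in E) (EFin \o h n) x @[n --> \oo]).
  have fE x : E x -> f x = lim ((EFin \o h n) x @[n --> \oo]).
    by move=> Ex; apply/esym/cvg_lim => //; exact: cvg_nnsfun_approx.
  under eq_integral => x /[!inE] /fE -> //.
  apply: monotone_convergence => //.
  - move=> n; apply/measurable_EFinP.
    by apply: (measurable_funS measurableT) => //; exact/measurable_funP.
  - by move=> n x Ex //=; rewrite lee_fin.
  - by move=> x Ex a b ab; rewrite lee_fin; exact/lefP/nd_nnsfun_approx.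
have -> : \int[mu]_(x in E) (f x * (g x)%:E) =
    lim (\int[mu]_(x in E) ((EFin \o h n) x * (g x)%:E) @[n --> \oo]).
  have fg x : E x -> f x * (g x)%:E = lim (((EFin \o h n) x * (g x)%:E) @[n --> \oo]).
    by move=> Ex; apply/esym/cvg_lim => //; apply: cvgeZr;
      [by []|exact: cvg_nnsfun_approx].
  under eq_integral => x /[!inE] /fg -> //.
  apply: monotone_convergence => [//| | |].
  - move=> n; apply/emeasurable_funM => //; apply/measurable_funTS.
      exact/measurable_EFinP.
  - by move=> n x Ex /=; rewrite mule_ge0 ?lee_fin ?g0.
  - by move=> x Ex a b ab/=; rewrite lee_wpmul2r ?lee_fin ?g0//; exact/lefP/nd_nnsfun_approx.
suff suf n : \int[mu]_(x in E) ((EFin \o h n) x * (g x)%:E) =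
    \int[nu]_(x in E) (EFin \o h n) x.
  by under eq_fun do rewrite suf.
transitivity (\int[nu]_(x in E)
   (\sum_(y \in range (h n)) (y * \1_(h n @^-1` [set y]) x)%:E)); last first.
  by apply: eq_integral => t tE; rewrite /= fimfunE -fsumEFin.
have indich m r : measurable_fun E (fun x => (r * \1_(h m @^-1` [set r]) x)%:E).
  by apply: (measurable_comp measurableT) => //; exact: measurable_funM.
rewrite ge0_integral_fsum//; last by move=> m y Ey; exact: nnfun_muleindic_ge0.
transitivity (\int[mu]_(x in E) (\sum_(y \in range (h n))
    (y * \1_(h n @^-1` [set y]) x)%:E * (g x)%:E)).
  under [RHS]eq_integral => x xE.
    rewrite -ge0_mule_fsuml => [|y]; last exact: nnfun_muleindic_ge0.
    rewrite fsumEFin // -(fimfunE _ x); over.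
  by [].
rewrite ge0_integral_fsum//; last 2 first.
  - by move=> y; apply: emeasurable_funM => //.
  - by move=> m y Ey; apply: mule_ge0; rewrite ?EFinM ?nnfun_muleindic_ge0 ?lee_fin ?g0.
apply: eq_fsbigr => r rhn.
under [RHS]eq_integral do rewrite EFinM.
rewrite integralZl_indic_nnsfun => //.
under eq_integral do rewrite EFinM -muleA.
rewrite ge0_integralZl//.
- under eq_integral do rewrite muleC.
  rewrite (eq_integral ((fun x => (g x)%:E) \_ (h n @^-1` [set r]))); last first.
    by move=> x xE; rewrite epatch_indic.
  by rewrite -integral_mkcondr -Hnu// ?integral_indic// setIC//; exact: measurableI.
- by apply: emeasurable_funM => //; exact/measurable_EFinP.
- by move=> t Et; rewrite mule_ge0 ?lee_fin ?g0.
- by move: rhn; rewrite inE => -[t _ <-]; rewrite lee_fin.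
Qed.
End cov.
Section aux.
Context {R : realType}.

Lemma measurable_inv_pos (h : R -> R) : measurable_fun setT h ->
  (forall x, 0 < h x) -> measurable_fun setT (fun x => (h x)^-1).
Proof.
move=> mh hp.
change (measurable_fun setT ((@GRing.inv R) \o h)).
have := @measurable_comp _ _ _ R R R `]0, +oo[%classic (@GRing.inv R) setT h.
move=> H; apply: H; last exact: mh.
- exact: measurable_itv.
- by move=> _ [x _ <-] /=; rewrite in_itv /= andbT hp.
- apply: open_continuous_measurable_fun; first exact: interval_open.
  move=> x; rewrite inE /= in_itv /= andbT => x0.
  by apply: inv_continuous; rewrite gt_eqF.
Qed.

Lemma I01P (t : R) : I01 t <-> (0 <= t <= 1).
Proof. by rewrite /I01 /= in_itv. Qed.

Definition clamp01 (t : R) := if (0 <= t <= 1) then t else 0.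
Definition useq (l : seq R) (n : nat) : R :=
  clamp01 (if odd n then nth 0 l n./2 else odflt 0 (omap (@ratr R) (unpickle n./2))).

Lemma useq_I01 l n : I01 (useq l n).
Proof.
apply/I01P; rewrite /useq /clamp01; case: ifP => // _.
by rewrite lexx ler01.
Qed.

Lemma useq_l l t : t \in l -> I01 t -> exists n, useq l n = t.
Proof.
move=> tl /I01P It; exists (index t l).*2.+1.
by rewrite /useq /= odd_double /= uphalf_double nth_index // /clamp01 It.
Qed.

Lemma useq_rat l q : I01 (ratr q : R) -> useq l (pickle q).*2 = ratr q.
Proof.
move=> /I01P It.
by rewrite /useq odd_double doubleK pickleK /= /clamp01 It.
Qed.
End aux.
Section supseq.
Context {R : realType}.
Local Open Scope ereal_scope.

Lemma sup01_seq (F : R -> R) (l : seq R) :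
  (forall t, I01 t -> t \notin l -> (F @ within I01 (nbhs t) --> F t)%R) ->
  sup01 F = ereal_sup (range (fun n => (F (useq l n))%:E)).
Proof.
move=> Fc; apply/eqP; rewrite eq_le; apply/andP; split; last first.
  by apply: ereal_sup_le => _ [n _ <-]; exists (useq l n) => //; exact: useq_I01.
apply/ereal_supP => _ [t It <-].
case: (boolP (t \in l)) => tl.
  have [n <-] := useq_l l t tl It.
  by apply: ereal_sup_ubound; exists n.
apply/lee_addgt0Pr => e e0.
have := Fc t It tl; move/cvgrPdist_lt => /(_ e e0).
rewrite near_withinE => /nbhs_ballP [del /= del0 Hdel].
pose lo : R := Num.max 0%R (t - del)%R.
pose hi : R := Num.min 1%R (t + del)%R.
have [q Hq] : exists q, (ratr q : R) \in `]lo, hi[.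
  apply: rat_in_itvoo.
  move/I01P: It => /andP[t0 t1].
  rewrite /lo /hi lt_min !gt_max ltr01 /=.
  apply/and3P; split; lra.
move: Hq; rewrite in_itv /= /lo /hi lt_min gt_max => /andP[/andP[q0 q1] /andP[q2 q3]].
have Iq : I01 (ratr q : R) by apply/I01P; apply/andP; split; lra.
have Hb : ball t del (ratr q : R).
  rewrite /ball /= ltr_norml; apply/andP; split; lra.
have := Hdel _ Hb Iq => Hlt.
apply: (@le_trans _ _ (F (ratr q) + e)%:E).
  rewrite lee_fin.
  move: Hlt; rewrite ltr_norml => /andP[_ ?]; lra.
rewrite EFinD leeD2r//.
apply: ereal_sup_ubound; exists (pickle q).*2 => //.
by rewrite useq_rat.
Qed.
End supseq.
Section supmeas.
Context {R : realType}.
Local Open Scope ereal_scope.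

Lemma sup01_meas (Fam : R -> R -> R) (l : seq R) :
  (forall t, I01 t -> measurable_fun setT (Fam t)) ->
  (forall s t, I01 t -> t \notin l ->
     ((fun u => Fam u s) @ within I01 (nbhs t) --> Fam t s)%R) ->
  measurable_fun setT (fun s => sup01 (fun t => Fam t s)).
Proof.
move=> mF cF.
have -> : (fun s => sup01 (fun t => Fam t s)) =
    (fun s => esups (fun n => (Fam (useq l n) s)%:E) 0%N).
  apply/funext => s; rewrite (@sup01_seq _ (fun t => Fam t s) l (cF s)).
  rewrite /esups /=; congr ereal_sup; apply/seteqP; split.
    by move=> _ [n _ <-]; exists n.
  by move=> _ [n _ <-]; exists n.
apply: (measurable_fun_esups (f := fun n s => (Fam (useq l n) s)%:E)).
move=> n; apply/measurable_EFinP; exact: mF (useq_I01 _ _).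
Qed.

Lemma sup01_eq (F G : R -> R) : (forall t, I01 t -> F t = G t) -> sup01 F = sup01 G.
Proof. by move=> FG; rewrite /sup01; congr ereal_sup; apply: eq_imagel => t /FG ->. Qed.

Lemma sup01_ge0 (F : R -> R) : (forall t, I01 t -> (0 <= F t)%R) -> 0 <= sup01 F.
Proof.
move=> F0; have I0 : I01 (0%R : R) by apply/I01P; rewrite lexx ler01.
apply: (le_trans _ (ereal_sup_ubound _)); last by exists 0%R.
by rewrite lee_fin F0.
Qed.

Lemma sup01_scale (F : R -> R) (c : R) : (0 < c)%R ->
  sup01 (fun t => F t * c)%R = c%:E * sup01 F.
Proof.
move=> c0; rewrite /sup01 -ereal_sup_pZl//; congr ereal_sup.
apply/seteqP; split.
  by move=> _ [t It <-]; exists (F t)%:E; [exists t|rewrite -EFinM mulrC].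
by move=> _ [_ [t It <-] <-]; exists t => //; rewrite -EFinM mulrC.
Qed.
End supmeas.
Section covrv.
Local Open Scope ereal_scope.
Lemma cov_RV d (T : measurableType d) (R : realType) (P : probability T R)
  (X : {RV P >-> R}) (h : R -> R)
  (Hhm : measurable_fun setT h) (Hh0 : forall x, (0 <= h x)%R)
  (HXh : forall A : set R, measurable A ->
     P (X @^-1` A) = (\int[lebesgue_measure]_(x in A) (h x)%:E))
  (G : R -> \bar R) (mG : measurable_fun setT G) (G0 : forall x, 0 <= G x) :
  \int[P]_w G (X w) = \int[lebesgue_measure]_x (G x * (h x)%:E).
Proof.
pose Y := measurableTypeR R.
have mXY : measurable_fun setT (X : T -> Y) by exact: measurable_funPT X.
have mGY : measurable_fun setT (G : Y -> \bar R) by exact: mG.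
have mhY : measurable_fun setT (h : Y -> R) by exact: Hhm.
pose XY : {mfun T >-> Y} := HB.pack (X : T -> Y) (isMeasurableFun.Build _ _ _ _ (X : T -> Y) mXY).
have -> : \int[P]_w G (X w) = \int[P]_(w in XY @^-1` setT) (G \o XY) w.
  by rewrite preimage_setT.
rewrite -(ge0_integral_pushforward mXY) //.
symmetry.
apply: (@my_cov _ Y R lebesgue_measure (distribution P XY) h Hh0 mhY).
- by move=> A mA; exact: (HXh A mA).
- by [].
- by [].
- by [].
Qed.
End covrv.
Theorem proposition2p2 (R : realType) (g : R -> R -> R)
  (Hdens : forall t, I01 t -> is_prob_density (g t))
  (Hcont : forall s, {within I01, continuous (fun t => g t s)})
  (Hint : (\int[lebesgue_measure]_s sup01 (fun t => g t s) < +oo)%E)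
  (d : measure_display) (T : measurableType d) (P : probability T R)
  (X : {RV P >-> R}) (h : R -> R)
  (Hhm : measurable_fun setT h) (Hhpos : forall x, 0 < h x)
  (HXh : forall A : set R, measurable A ->
     P (X @^-1` A) = (\int[lebesgue_measure]_(x in A) (h x)%:E)%E) :
  is_generator P (Zproc g h X) /\
  (forall f : R -> R, E01 f -> gstar_norm g f = Dnorm P (Zproc g h X) f).
Proof.
have mX : measurable_fun setT X := measurable_funPT X.
have mhV := @measurable_inv_pos R h Hhm Hhpos.
have g0 : forall t x, I01 t -> 0 <= g t x by move=> t x /Hdens [_ [+ _]].
have gm : forall t, I01 t -> measurable_fun setT (g t) by move=> t /Hdens [].
have gc : forall s t, I01 t -> ((fun u => g u s) @ within I01 (nbhs t) --> g t s).
  by move=> s t It; move: (Hcont s) => /subspace_continuousP; apply.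
have CoV : forall G : R -> \bar R, measurable_fun setT G -> (forall x, (0 <= G x)%E) ->
   (\int[P]_w G (X w) = \int[lebesgue_measure]_x (G x * (h x)%:E))%E.
  move=> G mG G0; apply: cov_RV => //.
  by move=> x; exact: ltW.
have K : forall Fam : R -> R -> R, (forall t x, I01 t -> 0 <= Fam t x) ->
    measurable_fun setT (fun x => sup01 (fun t => Fam t x)) ->
    (\int[P]_w sup01 (fun t => (Fam t (X w) / h (X w))%R) =
     \int[lebesgue_measure]_x sup01 (fun t => Fam t x))%E.
  move=> Fam F0 mF.
  transitivity (\int[P]_w ((fun x => ((h x)^-1)%R%:E * sup01 (fun t => Fam t x)) (X w)))%E.
    by apply: eq_integral => w _ /=; apply: sup01_scale; rewrite invr_gt0.
  rewrite (CoV (fun x => ((h x)^-1)%R%:E * sup01 (fun t => Fam t x)))%E.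
  - apply: eq_integral => x _.
    rewrite muleC muleA -EFinM mulfV ?mul1e//; exact: lt0r_neq0.
  - by apply: emeasurable_funM => //; exact/measurable_EFinP.
  - move=> x; apply: mule_ge0; first by rewrite lee_fin invr_ge0 ltW.
    by apply: sup01_ge0 => t It; exact: F0.
split.
  split; [|split; [|split]].
  - move=> t It; rewrite /Zproc; apply: measurable_funM.
      exact: measurableT_comp (gm t It) mX.
    exact: measurableT_comp mhV mX.
  - move=> w; split.
      apply/subspace_continuousP => t It; rewrite /Zproc.
      by apply: cvgMr_tmp; exact: gc.
    by move=> t It; rewrite /Zproc divr_ge0 ?g0 // ltW.
  - move=> t It; rewrite /Zproc.
    rewrite (CoV (fun x => (g t x / h x)%:E)).
    + have [_ [_ <-]] := Hdens t It.
      apply: eq_integral => x _.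
      by rewrite -EFinM -mulrA mulVf ?mulr1 // lt0r_neq0.
    + apply/measurable_EFinP; apply: measurable_funM => //; exact: gm.
    + by move=> x; rewrite lee_fin divr_ge0 ?g0 // ltW.
  - rewrite /Zproc K //.
    apply: (@sup01_meas R _ [::]) => // s t It _; exact: gc.
move=> f [[M fM] fin].
have [l Hl] := (finite_seqP _).1 fin.
rewrite /gstar_norm /Dnorm; symmetry.
transitivity (\int[P]_w sup01 (fun t => ((`|f t| * g t (X w)) / h (X w))%R))%E.
  apply: eq_integral => w _; apply: sup01_eq => t It.
  rewrite /Zproc normrM [`|_ / _|]ger0_norm ?mulrA // divr_ge0 ?g0 // ltW //.
apply: (K (fun t x => `|f t| * g t x)).
  by move=> t x It; rewrite mulr_ge0 ?g0.
apply: (@sup01_meas R (fun t x => `|f t| * g t x) l).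
  move=> t It; apply: measurable_funM => //; exact: gm.
move=> s t It tl; apply: cvgM; last exact: gc.
apply: cvg_norm.
case: (pselect (f @ within I01 (nbhs t) --> f t)) => // nc.
exfalso; move/negP: tl; apply.
have : [set t | I01 t /\ ~ (f @ within I01 (nbhs t) --> f t)] t by split.
by rewrite Hl.
Qed.
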